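(* Let $n\ge5$, let $A\in\mathrm{SGL}_n(\mathbb{F}_2)$ be nonalternate, and let $\mathbf{x}_1,\mathbf{x}_2,\mathbf{x}_3\in\mathbb{F}_2^n$ be linearly independent with $[\mathbf{x}_i^{\top}A^{-1}\mathbf{x}_j]_{i,j=1}^3=\begin{pmatrix}1&1&0\\1&1&0\\0&0&0\end{pmatrix}$. Then there exists $\mathbf{w}\in\mathbb{F}_2^n$ such that either $\mathbf{w}^{\top}A^{-1}\mathbf{w}=1=\mathbf{w}^{\top}A^{-1}\mathbf{x}_1$ and $\mathbf{w}^{\top}A^{-1}\mathbf{x}_2=0=\mathbf{w}^{\top}A^{-1}\mathbf{x}_3$, or $\mathbf{w}^{\top}A^{-1}\mathbf{w}=1=\mathbf{w}^{\top}A^{-1}\mathbf{x}_2$ and $\mathbf{w}^{\top}A^{-1}\mathbf{x}_1=0=\mathbf{w}^{\top}A^{-1}\mathbf{x}_3$.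
   Context: $\mathrm{SGL}_n(\mathbb{F}_2)$ is the set of invertible symmetric $n\times n$ matrices over the binary field $\mathbb{F}_2$. A symmetric matrix over $\mathbb{F}_2$ is alternate if its diagonal is zero; nonalternate otherwise. *)

(* Defs.v *)
From mathcomp Require Import all_boot all_algebra.
Set Implicit Arguments. Unset Strict Implicit. Unset Printing Implicit Defensive.
Import GRing.Theory.
Local Open Scope ring_scope.

Definition SGL (n : nat) (A : 'M['F_2]_n) : Prop :=
  A^T = A /\ A \in unitmx.

(* a symmetric matrix is alternate iff its diagonal is zero *)
Definition alternate (n : nat) (A : 'M['F_2]_n) : Prop :=
  forall i : 'I_n, A i i = 0.

Definition bform (n : nat) (A : 'M['F_2]_n) (x y : 'cV['F_2]_n) : 'F_2 :=
  (x^T *m invmx A *m y) ord0 ord0.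

Definition lin_indep (n k : nat) (x : 'I_k -> 'cV['F_2]_n) : Prop :=
  row_free (\matrix_(i < k, j < n) x i j ord0).

(* Main.v *)
Require Import Defs.
From mathcomp Require Import all_boot all_algebra.
Local Open Scope ring_scope.
Import GRing.Theory.

Lemma F2_add_self (a : 'F_2) : a + a = 0.
Proof. destruct a as [[|[|m]] Hm]; try by apply/val_inj. Qed.

Lemma F2b (a : 'F_2) : a != 1 -> a = 0.
Proof. destruct a as [[|[|m]] Hm]; try by move=> *; apply/val_inj. Qed.

Lemma bformDl n (A : 'M['F_2]_n) u v w : bform A (u + v) w = bform A u w + bform A v w.
Proof. by rewrite /bform linearD /= !mulmxDl mxE. Qed.

Lemma bformDr n (A : 'M['F_2]_n) u v w : bform A w (u + v) = bform A w u + bform A w v.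
Proof. by rewrite /bform mulmxDr mxE. Qed.

Lemma bform_sym n (A : 'M['F_2]_n) u v : A^T = A -> bform A u v = bform A v u.
Proof.
move=> sA; rewrite /bform.
transitivity ((u^T *m invmx A *m v)^T ord0 ord0); first by rewrite [RHS]mxE.
rewrite !trmx_mul trmxK trmx_inv sA mulmxA.
by [].
Qed.

Theorem lemma4p1 (n : nat) (A : 'M['F_2]_n) (x : 'I_3 -> 'cV['F_2]_n) :
  (5 <= n)%N ->
  SGL A ->
  ~ alternate A ->
  lin_indep x ->
  (forall i j : 'I_3,
     bform A (x i) (x j) = (\matrix_(i0 < 3, j0 < 3)
        (if ((i0 < 2)%N && (j0 < 2)%N) then 1 else 0 : 'F_2)) i j) ->
  exists w : 'cV['F_2]_n,
    (bform A w w = 1 /\ bform A w (x (@Ordinal 3 0 isT)) = 1 /\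
     bform A w (x (@Ordinal 3 1 isT)) = 0 /\ bform A w (x (@Ordinal 3 2 isT)) = 0)
    \/
    (bform A w w = 1 /\ bform A w (x (@Ordinal 3 1 isT)) = 1 /\
     bform A w (x (@Ordinal 3 0 isT)) = 0 /\ bform A w (x (@Ordinal 3 2 isT)) = 0).
Proof.
move=> _ [sA uA] _ li H.
set M := \matrix_(i < 3, j < n) x i j ord0.
set B := invmx A.
have uBt : B^T \in unitmx by rewrite unitmx_tr unitmx_inv.
have rf : row_free (M *m B^T).
  by rewrite /row_free mxrankMfree ?row_free_unit //; exact: li.
have [P hP] := row_freeP rf.
set y := col ord0 P.
have fy : forall i : 'I_3, bform A y (x i) = (i == ord0)%:R.
  move=> i.
  have hPt : (P^T *m B *m M^T) = 1%:M.
    by rewrite -[B]trmxK -trmx_mul -trmx_mul mulmxA hP trmx1.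
  have E := congr1 (fun K : 'M['F_2]_3 => K ord0 i) hPt.
  rewrite /= [RHS]mxE in E. rewrite eq_sym -E.
  rewrite /bform /y !mxE; apply: eq_bigr => k _; rewrite !mxE.
  congr (_ * _); apply: eq_bigr => l _; rewrite !mxE //.
have Hv : forall i j : 'I_3, bform A (x i) (x j) =
   (if ((i < 2)%N && (j < 2)%N) then 1 else 0 : 'F_2) by move=> i j; rewrite H mxE.
case Qy: (bform A y y == 1).
  exists y; left; rewrite (eqP Qy) !fy; split=> //.
exists (x (@Ordinal 3 0 isT) + y); right.
rewrite !bformDl !bformDr !fy !Hv /=.
rewrite (@bform_sym _ _ (x _) y sA) fy /=.
have -> : bform A y y = 0.
  by apply: F2b; rewrite Qy.
by rewrite addrA F2_add_self !addr0 add0r.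
Qed.
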